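(* Let $J,J'\subset\mathbb S$ with $\delta(J)=J$ and $\delta(J')=J'$. Let $y\in\tilde W$ and $\alpha\in\Sigma$, with reflection $s_\alpha\in W$. If there exist $w,w'\in W$ such that $w^{-1}y\delta(s_\alpha)\delta(w)\in\tilde W_J$ and $w'^{-1}y\delta(w')\in\tilde W_{J'}$, then $w^{-1}(\alpha)\in\Sigma_J$ or $w'^{-1}(\alpha)\in\Sigma_{J'}$.
   Context: Let $\tilde W=X_*(T)_\Gamma\rtimes W$ be the Iwahori–Weyl group of a quasi-split connected semisimple group $G$ over a local field $F$ (finite extension of $\mathbb Q_p$ or $\mathbb F_q((\epsilon))$) split over a tamely ramified extension, relative to a maximal $L$-split torus $S$ defined over $F$ with centralizer $T$, where $L$ is the completion of the maximal unramified extension of $F$ and $\Gamma=\mathrm{Gal}(\bar L/L)$. $\delta$ is the automorphism of $\tilde W$ and $W$ induced by the Frobenius of $L/F$. $\Sigma$ is the reduced root system on $X_*(T)_\Gamma\otimes\mathbb R$ whose affine roots are $v\mapsto\langle a,v\rangle+k$, $a\in\Sigma$, $k\in\mathbb Z$, with $W=W(\Sigma)$; $\mathbb S$ a set of simple roots (simple reflections) of $\Sigma$; for $J\subset\mathbb S$, $\Sigma_J$ is the set of roots spanned by $J$, $W_J$ the parabolic subgroup, $\tilde W_J=X_*(T)_\Gamma\rtimes W_J$. *)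

(* Defs.v *)
From HB Require Import structures.
From mathcomp Require Import all_boot all_order all_algebra.
Set Implicit Arguments. Unset Strict Implicit. Unset Printing Implicit Defensive.
Import Order.TTheory GRing.Theory Num.Theory.
Local Open Scope ring_scope.

Section RootData.
Variables (R : realFieldType) (n : nat).
Local Notation V := 'cV[R]_n.
Local Notation M := 'M[R]_n.

Definition dot (u v : V) : R := (u^T *m v) 0 0.

Definition refl (a : V) : M := 1%:M - (2 / dot a a) *: (a *m a^T).

Definition in_span (J : seq V) (v : V) : Prop :=
  exists c : V -> R, v = \sum_(a <- J) c a *: a.

Definition root_system (Sigma : seq V) : Prop :=
  [/\ 0 \notin Sigma,
      (forall v, in_span Sigma v),
      (forall a b, a \in Sigma -> b \in Sigma -> refl a *m b \in Sigma) &
      (forall a b, a \in Sigma -> b \in Sigma ->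
         exists k : int, 2 * dot b a / dot a a = k%:~R)].

Definition reduced (Sigma : seq V) : Prop :=
  forall a (c : R), a \in Sigma -> c *: a \in Sigma -> c = 1 \/ c = -1.

Definition is_base (Sigma S : seq V) : Prop :=
  [/\ uniq S, {subset S <= Sigma},
      (forall c : V -> R, \sum_(a <- S) c a *: a = 0 -> forall a, a \in S -> c a = 0) &
      (forall b, b \in Sigma -> exists c : V -> int,
          ((forall a, (0 <= c a)%R) \/ (forall a, (c a <= 0)%R)) /\
          b = \sum_(a <- S) (c a)%:~R *: a)].

Inductive gen (G : seq M) : M -> Prop :=
| gen_1 : gen G 1%:M
| gen_M g x : g \in G -> gen G x -> gen G (g *m x).

(* Weyl group W = W(Sigma), and parabolic subgroup W_J *)
Definition weyl (Sigma : seq V) : M -> Prop := gen [seq refl a | a <- Sigma].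

Definition rootsJ (Sigma J : seq V) (b : V) : Prop := b \in Sigma /\ in_span J b.

(* Frobenius: linear automorphism d of V preserving Sigma and the base S;
   it acts on W by conjugation *)
Definition frob (Sigma S : seq V) (d : M) : Prop :=
  [/\ d \in unitmx, (forall a, a \in Sigma -> d *m a \in Sigma) &
      (forall a, a \in S -> d *m a \in S)].

Definition deltaW (d w : M) : M := d *m w *m invmx d.

Definition dstable (d : M) (J : seq V) : Prop :=
  (forall a, a \in J -> d *m a \in J) /\
  (forall b, b \in J -> exists2 a, a \in J & b = d *m a).

(* Iwahori-Weyl group  X ⋊ W, elements are pairs (lambda, w) *)
Section Semidirect.
Variables (X : zmodType) (actX : M -> X -> X) (deltaX : X -> X).

Definition Wt := (X * M)%type.
Definition mulWt (x y : Wt) : Wt := (x.1 + actX x.2 y.1, x.2 *m y.2).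
Definition ofW (w : M) : Wt := (0, w).
Definition deltaWt (d : M) (x : Wt) : Wt := (deltaX x.1, deltaW d x.2).

Definition iw_data (Sigma : seq V) (d : M) : Prop :=
  [/\ (forall w l m, weyl Sigma w -> actX w (l + m) = actX w l + actX w m),
      (forall l, actX 1%:M l = l),
      (forall w1 w2 l, weyl Sigma w1 -> weyl Sigma w2 ->
          actX (w1 *m w2) l = actX w1 (actX w2 l)),
      (forall l m, deltaX (l + m) = deltaX l + deltaX m) &
      bijective deltaX] /\
  (forall w l, weyl Sigma w -> deltaX (actX w l) = actX (deltaW d w) (deltaX l)).

(* membership in tilde W_J = X ⋊ W_J *)
Definition inWtJ (J : seq V) (x : Wt) : Prop := weyl J x.2.
End Semidirect.
End RootData.

(* Main.v *)
Require Import Defs.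
From HB Require Import structures.
From mathcomp Require Import all_boot all_order all_algebra.
From Stdlib Require Import ClassicalEpsilon.
From mathcomp Require Import ring lra.
Set Implicit Arguments. Unset Strict Implicit. Unset Printing Implicit Defensive.
Import Order.TTheory GRing.Theory Num.Theory.
Local Open Scope ring_scope.

Section Basics.
Variables (R : realFieldType) (n : nat).
Local Notation V := 'cV[R]_n.
Local Notation M := 'M[R]_n.
Implicit Types (u v a b : V).

Lemma dotE u v : dot u v = \sum_i u i 0 * v i 0.
Proof. by rewrite /dot !mxE; apply: eq_bigr => i _; rewrite mxE. Qed.

Lemma dotC u v : dot u v = dot v u.
Proof. by rewrite !dotE; apply: eq_bigr => i _; rewrite mulrC. Qed.

Lemma dotDr u v w : dot u (v + w) = dot u v + dot u w.
Proof. by rewrite !dotE -big_split; apply: eq_bigr => i _; rewrite mxE mulrDr. Qed.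

Lemma dotZr u k v : dot u (k *: v) = k * dot u v.
Proof. by rewrite !dotE mulr_sumr; apply: eq_bigr => i _; rewrite mxE mulrCA. Qed.

Lemma dotNr u v : dot u (- v) = - dot u v.
Proof. by rewrite -scaleN1r dotZr mulN1r. Qed.

Lemma dotBr u v w : dot u (v - w) = dot u v - dot u w.
Proof. by rewrite dotDr dotNr. Qed.

Lemma dot0r u : dot u 0 = 0.
Proof. by rewrite -(scale0r (0:V)) dotZr mul0r. Qed.

Lemma dot_sumr (I : Type) (s : seq I) (F : I -> V) u :
  dot u (\sum_(i <- s) F i) = \sum_(i <- s) dot u (F i).
Proof.
elim: s => [|x s IH]; first by rewrite !big_nil dot0r.
by rewrite !big_cons dotDr IH.
Qed.

Lemma dot_gt0 u : u != 0 -> 0 < dot u u.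
Proof.
move=> nz; rewrite dotE lt0r; apply/andP; split; last first.
  by apply: sumr_ge0 => i _; rewrite -expr2 sqr_ge0.
apply: contra nz => /eqP H; apply/eqP/matrixP => i j.
rewrite (ord1 j) mxE; apply/eqP; rewrite -sqrf_eq0.
have H2 : \sum_(k < n) u k 0 ^+ 2 = 0.
  by rewrite -[RHS]H; apply: eq_bigr => k _; rewrite expr2.
by rewrite (psumr_eq0P (P := predT) (fun k _ => sqr_ge0 (u k 0)) H2 (i := i) isT).
Qed.

Lemma reflE a v : refl a *m v = v - (2 / dot a a * dot a v) *: a.
Proof.
rewrite /refl mulmxBl mul1mx -scalemxAl -mulmxA [a^T *m v]mx11_scalar.
by rewrite mul_mx_scalar scalerA.
Qed.

Lemma reflK a v : dot a a != 0 -> refl a *m (refl a *m v) = v.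
Proof.
move=> nz; rewrite [refl a *m v]reflE reflE dotBr dotZr.
set k := 2 / dot a a * dot a v.
have -> : 2 / dot a a * (dot a v - k * dot a a) = - k.
  rewrite /k; field; exact: nz.
by rewrite scaleNr opprK subrK.
Qed.

Lemma refl_dot a u v : dot a a != 0 -> dot (refl a *m u) (refl a *m v) = dot u v.
Proof.
move=> nz; rewrite !reflE dotBr ![dot (_ - _) _]dotC !dotBr !dotZr ![dot (_ *: _) _]dotC !dotZr.
rewrite [dot v u]dotC [dot v a]dotC [dot u a]dotC; field; exact: nz.
Qed.

Lemma refl_unit a : dot a a != 0 -> refl a \in unitmx.
Proof.
move=> nz; suff H : refl a *m refl a = 1%:M by case: (mulmx1_unit H).
rewrite /refl mulmxBl mul1mx mulmxBr mulmx1 -!scalemxAl -!scalemxAr.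
rewrite -[(a *m a^T) *m (a *m a^T)]mulmxA [a^T *m (a *m a^T)]mulmxA.
rewrite [a^T *m a]mx11_scalar mul_scalar_mx -scalemxAr !scalerA.
have -> : 2 / dot a a * (2 / dot a a * (a^T *m a) 0 0) = 2 / dot a a + 2 / dot a a.
  rewrite -/(dot a a); field; exact: nz.
by rewrite scalerDl opprB addrK subrK.
Qed.


Lemma gen_unit (Gs : seq V) x : (forall a, a \in Gs -> dot a a != 0) ->
  gen [seq refl a | a <- Gs] x -> x \in unitmx.
Proof.
move=> H; elim=> [|g y /mapP[a aG ->] _ IH]; first exact: unitmx1.
by rewrite unitmx_mul refl_unit ?H.
Qed.

Lemma gen_dot (Gs : seq V) x : (forall a, a \in Gs -> dot a a != 0) ->
  gen [seq refl a | a <- Gs] x -> forall u v, dot (x *m u) (x *m v) = dot u v.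
Proof.
move=> H; elim=> [|g y /mapP[a aG ->] _ IH] u v; first by rewrite !mul1mx.
by rewrite -!mulmxA refl_dot ?H.
Qed.

Lemma weyl_root (Sigma : seq V) x : root_system Sigma -> weyl Sigma x ->
  forall b, b \in Sigma -> x *m b \in Sigma.
Proof.
case=> _ _ Hr _; elim => [|g y /mapP[a aS ->] _ IH] b bS; first by rewrite mul1mx.
by rewrite -mulmxA; apply: Hr => //; apply: IH.
Qed.

Lemma perm_map_mx (g : M) (s : seq V) : g \in unitmx -> uniq s ->
  (forall v, v \in s -> g *m v \in s) -> perm_eq [seq g *m v | v <- s] s.
Proof.
move=> gu us Hs.
have inj : injective (fun v : V => g *m v).
  by apply: (can_inj (g := fun v : V => invmx g *m v)) => v; exact: mulKmx.
have um : uniq [seq g *m v | v <- s] by rewrite (map_inj_uniq inj).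
have sub : {subset [seq g *m v | v <- s] <= s} by move=> x /mapP[v vs ->]; exact: Hs.
have [_ eqi] := uniq_min_size um sub (eq_leq (esym (size_map _ _))).
exact: uniq_perm.
Qed.

Lemma reindex_mx (g : M) (s : seq V) (F : V -> R) : g \in unitmx -> uniq s ->
  (forall v, v \in s -> g *m v \in s) ->
  \sum_(v <- s) F v = \sum_(v <- s) F (g *m v).
Proof.
move=> gu us Hs; rewrite -(perm_big _ (perm_map_mx gu us Hs)) big_map //.
Qed.

Lemma reindex_mxV (g : M) (s : seq V) (F : V -> V) : g \in unitmx -> uniq s ->
  (forall v, v \in s -> g *m v \in s) ->
  \sum_(v <- s) F v = \sum_(v <- s) F (g *m v).
Proof.
move=> gu us Hs; rewrite -(perm_big _ (perm_map_mx gu us Hs)) big_map //.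
Qed.

End Basics.

Section Coef.
Variables (R : realFieldType) (n : nat).
Local Notation V := 'cV[R]_n.
Local Notation M := 'M[R]_n.
Variable S : seq V.
Hypothesis Su : uniq S.
Hypothesis Sind : forall c : V -> R, \sum_(a <- S) c a *: a = 0 -> forall a, a \in S -> c a = 0.
Hypothesis Sspan : forall v : V, in_span S v.

Definition coef (v : V) : V -> R :=
  proj1_sig (constructive_indefinite_description _ (Sspan v)).

Lemma coefE v : v = \sum_(a <- S) coef v a *: a.
Proof. exact: (proj2_sig (constructive_indefinite_description _ (Sspan v))). Qed.

Lemma coef_uniq c1 c2 : \sum_(a <- S) c1 a *: a = \sum_(a <- S) c2 a *: a ->
  forall a, a \in S -> c1 a = c2 a.
Proof.
move=> E a aS; apply/eqP; rewrite -subr_eq0; apply/eqP.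
apply: (Sind (c := fun a => c1 a - c2 a)) => //.
rewrite (eq_bigr (fun a => c1 a *: a - c2 a *: a)) => [|b _]; last by rewrite scalerBl.
by rewrite sumrB E subrr.
Qed.

Lemma coef_sum c a : a \in S -> coef (\sum_(b <- S) c b *: b) a = c a.
Proof. by move=> aS; apply: coef_uniq aS; rewrite -coefE. Qed.

Definition fK (K : seq V) (v : V) : R := \sum_(a <- S) (if a \in K then 0 else coef v a).

Lemma fK_sum K c : fK K (\sum_(a <- S) c a *: a) = \sum_(a <- S) (if a \in K then 0 else c a).
Proof. by apply: eq_big_seq => a aS; rewrite coef_sum. Qed.

Lemma fK_lin K k u v : fK K (k *: u + v) = k * fK K u + fK K v.
Proof.
have -> : k *: u + v = \sum_(a <- S) (k * coef u a + coef v a) *: a.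
  rewrite [in LHS](coefE u) [in LHS](coefE v) scaler_sumr -big_split.
  by apply: eq_bigr => a _; rewrite scalerDl scalerA.
rewrite fK_sum /fK mulr_sumr -big_split; apply: eq_bigr => a _.
by destruct (a \in K); rewrite /= ?mulr0 ?addr0.
Qed.

Lemma fK_add K u v : fK K (u + v) = fK K u + fK K v.
Proof. by have := fK_lin K 1 u v; rewrite scale1r mul1r. Qed.

Lemma fK0 K : fK K 0 = 0.
Proof. by have := fK_lin K (-1) 0 0; rewrite scaleN1r oppr0 addr0 mulN1r addNr. Qed.

Lemma fK_scale K k u : fK K (k *: u) = k * fK K u.
Proof. by have := fK_lin K k u 0; rewrite !addr0 fK0 addr0. Qed.

Lemma fK_S K a : a \in S -> fK K a = if a \in K then 0 else 1.
Proof.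
move=> aS.
have E : a = \sum_(b <- S) (if b == a then 1 else 0) *: b.
  rewrite (bigD1_seq a) //= eqxx scale1r big1 ?addr0 // => b /negPf ->.
  by rewrite scale0r.
rewrite {1}E fK_sum (bigD1_seq a) //= eqxx big1 ?addr0 // => b /negPf ->.
by case: (b \in K).
Qed.

Lemma fK_refl K b v : b \in S ->
  fK K (refl b *m v) = fK K v - (2 / dot b b * dot b v) * (if b \in K then 0 else 1).
Proof.
move=> bS; rewrite reflE -scaleNr addrC fK_lin fK_S // mulNr addrC.
by [].
Qed.

Lemma fK_weyl K x : {subset K <= S} -> gen [seq refl a | a <- K] x ->
  forall v, fK K (x *m v) = fK K v.
Proof.
move=> KS; elim=> [|g y /mapP[a aK ->] _ IH] v; first by rewrite mul1mx.
by rewrite -mulmxA fK_refl ?KS // aK mulr0 subr0 IH.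
Qed.

Lemma fK_d K (d : M) : d \in unitmx -> (forall a, a \in S -> d *m a \in S) ->
  (forall a, a \in S -> (d *m a \in K) = (a \in K)) ->
  forall v, fK K (d *m v) = fK K v.
Proof.
move=> du dS dK v.
pose c' (b : V) := coef v (invmx d *m b).
have E : d *m v = \sum_(b <- S) c' b *: b.
  rewrite [in LHS](coefE v) mulmx_sumr.
  rewrite (reindex_mxV (fun b => c' b *: b) du Su dS).
  apply: eq_bigr => a _; by rewrite -scalemxAr /c' mulKmx.
rewrite E fK_sum [RHS]/fK (reindex_mx (fun b => if b \in K then 0 else c' b) du Su dS).
apply: eq_big_seq => a aS; by rewrite dK // /c' mulKmx.
Qed.

Lemma in_span_undup (K : seq V) (c : V -> R) :
  in_span K (\sum_(a <- undup K) c a *: a).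
Proof.
exists (fun a => c a / (count_mem a K)%:R).
rewrite -[RHS]big_undup_iterop_count; apply: eq_big_seq => a aK.
rewrite mem_undup in aK.
change (c a *: a = (c a / (count_mem a K)%:R *: a) *+ count_mem a K).
rewrite scalerMnl -mulr_natr divfK //.

by rewrite pnatr_eq0 -lt0n -has_count has_pred1.
Qed.

Lemma span_of K (c : V -> int) (h : V -> R) (b : V) : {subset K <= S} ->
  ((forall a, (0 <= c a)%R) \/ (forall a, (c a <= 0)%R)) ->
  b = \sum_(a <- S) (c a)%:~R *: a ->
  (forall a, a \in S -> 0 <= h a) -> (forall a, a \in S -> a \notin K -> 0 < h a) ->
  \sum_(a <- S) (c a)%:~R * h a = 0 -> in_span K b.
Proof.
move=> KS Hc Eb h0 hp Hs.
have key : forall F : V -> R, (forall i, i \in S -> 0 <= F i) ->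
    \sum_(i <- S) F i = 0 -> forall i, i \in S -> F i = 0.
  move=> F F0 FS i iS; move/eqP: FS; rewrite big_seq psumr_eq0 //.
  by move=> /allP/(_ i iS); rewrite iS /= => /eqP.
have c0 : forall a, a \in S -> a \notin K -> c a = 0.
  move=> a aS aK.
  have ha := hp a aS aK.
  have : (c a)%:~R * h a = 0 :> R.
    case: Hc => Hc.
      apply: (key (fun i => (c i)%:~R * h i)) => // i iS.
      by rewrite mulr_ge0 ?ler0z ?h0.
    apply/eqP; rewrite -oppr_eq0; apply/eqP.
    apply: (key (fun i => - ((c i)%:~R * h i))) => //; last by rewrite sumrN Hs oppr0.
    by move=> i iS; rewrite -mulNr mulr_ge0 ?h0 // oppr_ge0 lerz0.
  by move/eqP; rewrite mulf_eq0 (gt_eqF ha) orbF intr_eq0 => /eqP.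
have -> : b = \sum_(a <- undup K) (c a)%:~R *: a.
  rewrite Eb (bigID (fun a => a \in K)) /= [X in _ + X]big1_seq ?addr0.
    rewrite -big_filter; apply: perm_big; apply: uniq_perm.
    - exact: filter_uniq.
    - exact: undup_uniq.
    move=> x; rewrite mem_filter mem_undup.
    by case xK: (x \in K); rewrite //= KS.
  by move=> a /andP[aK aS]; rewrite c0 // scale0r.
exact: in_span_undup.
Qed.


Variable Sigma : seq V.
Hypothesis Sroots : forall a b, a \in Sigma -> b \in Sigma -> refl a *m b \in Sigma.
Hypothesis Snz : forall a, a \in Sigma -> dot a a != 0.
Variable J : seq V.

Definition zJ := \sum_(g <- undup Sigma) fK J g *: g.

Lemma zJ_fixed (g : M) : g \in unitmx -> (forall b, b \in Sigma -> g *m b \in Sigma) ->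
  (forall b, b \in Sigma -> fK J (g *m b) = fK J b) -> g *m zJ = zJ.
Proof.
move=> gu gS gf.
have gU : forall v, v \in undup Sigma -> g *m v \in undup Sigma.
  by move=> v; rewrite !mem_undup; exact: gS.
rewrite /zJ mulmx_sumr (reindex_mxV (fun b => fK J b *: b) gu (undup_uniq _) gU) /=.
by apply: eq_big_seq => b; rewrite mem_undup => bS; rewrite scalemxAr gf.
Qed.

Lemma zJ_dot a : a \in Sigma ->
  2 * dot a zJ = fK J a * (2 / dot a a * \sum_(b <- undup Sigma) dot a b ^+ 2).
Proof.
move=> aS; have nz := Snz aS; have au := refl_unit nz.
have gU : forall v, v \in undup Sigma -> refl a *m v \in undup Sigma.
  by move=> v; rewrite !mem_undup; exact: Sroots.
have E1 : dot a zJ = \sum_(b <- undup Sigma) fK J b * dot a b.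
  by rewrite /zJ dot_sumr; apply: eq_bigr => b _; rewrite dotZr mulrC.
have E2 : dot a zJ = \sum_(b <- undup Sigma)
     (fK J b - 2 / dot a a * dot a b * fK J a) * (- dot a b).
  rewrite E1 (reindex_mx (fun b => fK J b * dot a b) au (undup_uniq _) gU).
  apply: eq_bigr => b _; rewrite reflE -scaleNr addrC fK_lin dotDr dotZr.
  field; exact: nz.
have -> : 2 * dot a zJ = dot a zJ + dot a zJ by ring.
rewrite {1}E1 E2 -big_split mulr_sumr mulr_sumr.
apply: eq_bigr => b _ /=; field; exact: nz.
Qed.

Lemma sum_sq_gt0 a : a \in Sigma -> 0 < \sum_(b <- undup Sigma) dot a b ^+ 2.
Proof.
move=> aS; rewrite (bigD1_seq a) ?mem_undup ?undup_uniq //=.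
apply: ltr_wpDr; first by apply: sumr_ge0 => i _; rewrite sqr_ge0.
by rewrite lt_def sqrf_eq0 Snz //= sqr_ge0.
Qed.

End Coef.

Unset Implicit Arguments.

Theorem lemma4p4p4 (R : realFieldType) (n : nat) (Sigma S : seq 'cV[R]_n)
  (d : 'M[R]_n) (X : zmodType) (actX : 'M[R]_n -> X -> X) (deltaX : X -> X)
  (J J' : seq 'cV[R]_n) (y : X * 'M[R]_n) (alpha : 'cV[R]_n) (w w' : 'M[R]_n) :
  root_system Sigma -> reduced Sigma -> is_base Sigma S ->
  frob Sigma S d -> iw_data actX deltaX Sigma d ->
  {subset J <= S} -> {subset J' <= S} -> dstable d J -> dstable d J' ->
  weyl Sigma y.2 -> alpha \in Sigma ->
  weyl Sigma w -> weyl Sigma w' ->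
  inWtJ J (mulWt actX (mulWt actX (mulWt actX (ofW X (invmx w)) y)
             (deltaWt deltaX d (ofW X (refl alpha)))) (deltaWt deltaX d (ofW X w))) ->
  inWtJ J' (mulWt actX (mulWt actX (ofW X (invmx w')) y)
             (deltaWt deltaX d (ofW X w'))) ->
  rootsJ Sigma J (invmx w *m alpha) \/ rootsJ Sigma J' (invmx w' *m alpha).
Proof.
move=> [Hn0 Hspan Hrefl Hint] _ [Su Ssub Sind Sexp] [du dSig dS] _ JS J'S
  [dJ1 dJ2] [dJ'1 dJ'2] Wy aS Ww Ww' HA HB.
rewrite /inWtJ /mulWt /ofW /deltaWt /deltaW /= in HA HB.
set Y := y.2 in HA HB.
set XA := (invmx w *m Y *m _ *m _) in HA.
set XB := (invmx w' *m Y *m _) in HB.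
have Spos : forall a, a \in Sigma -> 0 < dot a a.
  move=> a aS'; have anz : a != 0 by apply/eqP => a0; rewrite -a0 aS' in Hn0.
  exact: dot_gt0.
have Snz : forall a, a \in Sigma -> dot a a != 0.
  by move=> a aS'; rewrite (gt_eqF (Spos a aS')).
have SpanS : forall v, in_span S v.
  have Cl : forall k u v, in_span S u -> in_span S v -> in_span S (k *: u + v).
    move=> k u v [cu ->] [cv ->]; exists (fun a => k * cu a + cv a).
    by rewrite scaler_sumr -big_split; apply: eq_bigr => a _; rewrite scalerDl scalerA.
  have C0 : in_span S 0.
    by exists (fun _ => 0); rewrite big1 // => a _; rewrite scale0r.
  move=> v; have [e ->] := Hspan v.
  rewrite big_seq; apply: (big_ind (in_span S)) => //.
    by move=> u1 u2 h1 h2; rewrite -(scale1r u1); exact: Cl.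
  move=> b bS; have [c [_ Eb]] := Sexp b bS.
  rewrite -(addr0 (e b *: b)); apply: Cl => //; rewrite Eb.
  by exists (fun a => (c a)%:~R).
have dK : forall K, dstable d K -> forall a, a \in S -> (d *m a \in K) = (a \in K).
  move=> K [dK1 dK2] a aS'; apply/idP/idP => [H|]; last exact: dK1.
  have [a0 a0K E] := dK2 _ H.
  by rewrite -(mulKmx du a) E mulKmx.
have wu : forall x, weyl Sigma x -> x \in unitmx.
  by move=> x; apply: gen_unit.
have invroot : forall x, weyl Sigma x -> forall a, a \in Sigma -> invmx x *m a \in Sigma.
  move=> x Wx a aS'.
  have P := perm_map_mx (wu x Wx) (undup_uniq Sigma)
    (fun v vS => (etrans (mem_undup _ _) (weyl_root (And4 Hn0 Hspan Hrefl Hint) Wx (etrans (esym (mem_undup _ _)) vS)))).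
  have : a \in [seq x *m v | v <- undup Sigma] by rewrite (perm_mem P) mem_undup.
  by case/mapP => g gS ->; rewrite mulKmx ?wu // -mem_undup.
pose z := zJ SpanS Sigma J.
have zd : d *m z = z.
  apply: zJ_fixed => // b _.
  exact: (fK_d Su Sind SpanS du dS (dK J (conj dJ1 dJ2))).
have zW : forall x, gen [seq refl a | a <- J] x -> x *m z = z.
  move=> x0 Wx0; elim: Wx0 => [|g x /mapP[a aJ ->] _ IH]; first by rewrite mul1mx.
  have aS' : a \in Sigma by apply: Ssub; apply: JS.
  rewrite -mulmxA IH; apply: zJ_fixed.
  - exact: refl_unit (Snz _ aS').
  - by move=> b bS; exact: Hrefl.
  - by move=> b _; rewrite (fK_refl Su Sind SpanS) ?JS // aJ mulr0 subr0.
have hz : forall a, a \in S -> 2 * dot a z =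
    (if a \in J then 0 else 1) * (2 / dot a a * \sum_(b <- undup Sigma) dot a b ^+ 2).
  move=> a aS'; rewrite (zJ_dot Sind SpanS Hrefl Snz) ?Ssub //.
  by rewrite (fK_S Su Sind SpanS).
have hpos : forall a, a \in S -> a \notin J -> 0 < dot a z.
  move=> a aS' aJ; have := hz a aS'; rewrite (negPf aJ) mul1r.
  have P : 0 < 2 / dot a a * \sum_(b <- undup Sigma) dot a b ^+ 2.
    by rewrite mulr_gt0 ?divr_gt0 ?Spos ?Ssub // sum_sq_gt0 // Ssub.
  move: P; set p := 2 / dot a a * _; move=> P E; lra.
have h0 : forall a, a \in S -> 0 <= dot a z.
  move=> a aS'; case: (boolP (a \in J)) => aJ; last exact: ltW (hpos a aS' aJ).
  have := hz a aS'; rewrite aJ mul0r => E; lra.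
have EA : Y *m d *m refl alpha *m w = w *m XA *m d.
  rewrite /XA !mulmxA (mulmxV (wu w Ww)) mul1mx -!(mulmxA _ (invmx d) d) (mulVmx du) !mulmx1.
  done.
have EB : Y *m d *m w' = w' *m XB *m d.
  rewrite /XB !mulmxA (mulmxV (wu w' Ww')) mul1mx -!(mulmxA _ (invmx d) d) (mulVmx du) !mulmx1.
  done.
pose v := w *m z.
have Fv : Y *m d *m refl alpha *m v = v.
  by rewrite /v mulmxA EA -mulmxA zd -mulmxA (zW XA HA).
pose u := invmx w' *m (refl alpha *m v).
have Fu : XB *m (d *m u) = invmx w' *m v.
  have H : w' *m (XB *m (d *m u)) = v.
    by rewrite /u mulmxA mulmxA -EB mulmxA -(mulmxA _ w' (invmx w')) (mulmxV (wu w' Ww')) mulmx1 mulmxA Fv.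
  by rewrite -H mulKmx ?wu.
have Ef : fK SpanS J' u = fK SpanS J' (invmx w' *m v).
  by rewrite -Fu (fK_weyl Su Sind SpanS J'S HB) (fK_d Su Sind SpanS du dS (dK J' (conj dJ'1 dJ'2))).
have Ek : (2 / dot alpha alpha * dot alpha v) * fK SpanS J' (invmx w' *m alpha) = 0.
  move: Ef; rewrite /u reflE mulmxBr -scalemxAr -scaleNr addrC (fK_lin Sind SpanS).
  set k := 2 / dot alpha alpha * dot alpha v.
  set f1 := fK SpanS J' (invmx w' *m alpha).
  set f2 := fK SpanS J' (invmx w' *m v).
  move=> E; have : k * f1 = - ((- k) * f1 + f2 - f2) by ring.
  by rewrite E subrr oppr0.
case: (eqVneq (fK SpanS J' (invmx w' *m alpha)) 0) => [f0|fn0].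
  right; split; first exact: invroot.
  have [c [Hc Eb]] := Sexp _ (invroot w' Ww' alpha aS).
  apply: (span_of Su (h := fun a => if a \in J' then 0 else 1) J'S Hc Eb).
  - by move=> a _; case: ifP.
  - by move=> a _ /negPf ->; exact: ltr01.
  rewrite -[RHS]f0 Eb (fK_sum Sind SpanS); apply: eq_bigr => a _.
  by case: ifP => _; rewrite ?mulr0 ?mulr1.
left; split; first exact: invroot.
have dv : dot alpha v = 0.
  move/eqP: Ek; rewrite mulf_eq0 (negPf fn0) orbF mulf_eq0 => /orP[|/eqP //].
  by rewrite mulf_eq0 invr_eq0 (negPf (Snz _ aS)) orbF => /eqP H; move: H; lra.
have [c [Hc Eb]] := Sexp _ (invroot w Ww alpha aS).
apply: (span_of Su (h := fun a => dot a z) JS Hc Eb h0 hpos).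
transitivity (dot (invmx w *m alpha) z).
  rewrite [in RHS]Eb dotC dot_sumr; apply: eq_bigr => a _.
  by rewrite dotZr dotC.
rewrite -(gen_dot Snz Ww) mulKVmx ?wu //.
Qed.
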